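(* Let $\mathcal G$ be an étale groupoid, $Z$ a locally compact Hausdorff proper $\mathcal G$-compact $\mathcal G$-space, $K_1,K_2$ compact subsets of $\mathcal G$, and $\phi_1:Z\to P_{K_1}(\mathcal G)$, $\phi_2:Z\to P_{K_2}(\mathcal G)$ $\mathcal G$-equivariant continuous maps. Then there exists a compact subset $K\supseteq K_1\cup K_2$ of $\mathcal G$ such that $\iota_{K_1,K}\circ\phi_1$ and $\iota_{K_2,K}\circ\phi_2$ are $\mathcal G$-equivariantly homotopic maps $Z\to P_K(\mathcal G)$.
   Context: Étale groupoids are locally compact Hausdorff with range map a local homeomorphism. $P(\mathcal G)$ is the space of positive Radon measures $\mu$ on $\mathcal G$ with $\mu(\mathcal G)=1$ and support contained in a single fibre $r^{-1}(x)$, with the weak-$*$ topology from $C_c(\mathcal G,\mathbb R)$ and $\mathcal G$-action by left translation, $\gamma(\sum c_i\delta_{\gamma_i})=\sum c_i\delta_{\gamma\gamma_i}$. For compact $K\subseteq\mathcal G$, $P_K(\mathcal G)$ is the subspace of finitely supported $\mu\in P(\mathcal G)$ whose support $\delta$ satisfies $r(\gamma_1)=r(\gamma_2)$ and $\gamma_1^{-1}\gamma_2\in K$ for all $\gamma_1,\gamma_2\in\delta$ (the geometric realization of the Rips complex). For $K'\subseteq K$, $\iota_{K',K}:P_{K'}(\mathcal G)\hookrightarrow P_K(\mathcal G)$ is the inclusion. A $\mathcal G$-space is $\mathcal G$-compact if it is $\mathcal GC$ for some compact $C$; a $\mathcal G$-homotopy is a $\mathcal G$-equivariant continuous map $[0,1]\times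 Z\to P_K(\mathcal G)$. *)

(* Defs.v *)
From HB Require Import structures.
From mathcomp Require Import all_boot all_order all_algebra.
From mathcomp Require Import all_classical all_reals all_analysis.
Set Implicit Arguments. Unset Strict Implicit. Unset Printing Implicit Defensive.
Import Order.TTheory GRing.Theory Num.Theory numFieldNormedType.Exports.
Local Open Scope classical_set_scope.
Local Open Scope ring_scope.

Record groupoid_ops (G : Type) := GroupoidOps {
  gunits : set G;
  grange : G -> G;
  gsource : G -> G;
  gmul : G -> G -> G;      (* composition, meaningful when s g = r h *)
  ginv : G -> G }.

Definition is_groupoid (G : Type) (o : groupoid_ops G) : Prop :=
  let r := grange o in let s := gsource o in
  let m := gmul o in let i := ginv o in
  (((forall g, gunits o (r g) /\ gunits o (s g))) /\
     ((forall u, gunits o u -> r u = u /\ s u = u)) /\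
     ((forall g h, s g = r h -> r (m g h) = r g /\ s (m g h) = s h)) /\
     ((forall g h k, s g = r h -> s h = r k -> m (m g h) k = m g (m h k))) /\
     ((forall g, m (r g) g = g /\ m g (s g) = g) /\
      (forall g, r (i g) = s g /\ s (i g) = r g /\
                 m g (i g) = r g /\ m (i g) g = s g))).

(* r is a local homeomorphism: continuous, and every arrow has an open
   neighbourhood U on which r is injective and maps open subsets of U to
   open sets (so r|U : U -> r(U) is a homeomorphism onto an open set). *)
Definition local_homeomorphism (X Y : topologicalType) (f : X -> Y) : Prop :=
  continuous f /\
  forall x, exists U : set X, ((open U) /\
     (U x) /\
     ({in U &, injective f}) /\
     (forall V : set X, open V -> V `<=` U -> open (f @` V))).

Definition etale_groupoid (G : topologicalType) (o : groupoid_ops G) : Prop :=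
  ((is_groupoid o) /\
     (hausdorff_space G) /\
     (locally_compact [set: G]) /\
     ({within [set gh : G * G | gsource o gh.1 = grange o gh.2],
         continuous (fun gh : G * G => gmul o gh.1 gh.2)}) /\
     (continuous (ginv o) /\
      local_homeomorphism (grange o))).

Definition G_space (G Z : topologicalType) (o : groupoid_ops G)
    (p : Z -> G) (act : G -> Z -> Z) : Prop :=
  ((continuous p /\ (forall z, gunits o (p z))) /\
     ((forall g z, gsource o g = p z -> p (act g z) = grange o g)) /\
     ((forall z, act (p z) z = z)) /\
     ((forall g h z, gsource o g = grange o h -> gsource o h = p z ->
                     act (gmul o g h) z = act g (act h z))) /\
     ({within [set gz : G * Z | gsource o gz.1 = p gz.2],
         continuous (fun gz : G * Z => act gz.1 gz.2)})).

Definition proper_action (G Z : topologicalType) (o : groupoid_ops G)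
    (p : Z -> G) (act : G -> Z -> Z) : Prop :=
  forall C : set (Z * Z), compact C ->
    compact [set gz : G * Z | gsource o gz.1 = p gz.2 /\
                              C (act gz.1 gz.2, gz.2)].

Definition G_compact (G Z : topologicalType) (o : groupoid_ops G)
    (p : Z -> G) (act : G -> Z -> Z) : Prop :=
  exists C : set Z, compact C /\
    forall z, exists g c, ((C c) /\
     (gsource o g = p c) /\
     (z = act g c)).

(* Finitely supported measures on G are represented by their mass function
   mu : G -> R, mu = sum_{g in supp mu} mu(g) delta_g. *)
Definition msupp (G : Type) (R : realType) (mu : G -> R) : set G :=
  [set g | mu g != 0].

Definition mint (G : choiceType) (R : realType) (mu : G -> R) (f : G -> R) : R :=
  \sum_(g \in msupp mu) mu g * f g.

Definition in_PK (G : choiceType) (R : realType) (o : groupoid_ops G)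
    (K : set G) (mu : G -> R) : Prop :=
  (((forall g, 0 <= mu g)) /\
     (finite_set (msupp mu)) /\
     (\sum_(g \in msupp mu) mu g = 1) /\
     ((forall g1 g2, msupp mu g1 -> msupp mu g2 ->
         grange o g1 = grange o g2 /\ K (gmul o (ginv o g1) g2)))).

(* left translation: (g mu)(eta) = mu(g^{-1} eta) on r^{-1}(r g), 0 elsewhere;
   i.e. g (sum c_i delta_{g_i}) = sum c_i delta_{g g_i}. *)
Definition mtranslate (G : Type) (R : realType) (o : groupoid_ops G)
    (g : G) (mu : G -> R) : G -> R :=
  fun eta => if `[< grange o eta = grange o g >]
             then mu (gmul o (ginv o g) eta) else 0.

Definition Cc (G : topologicalType) (R : realType) (f : G -> R) : Prop :=
  continuous f /\ exists C : set G, compact C /\ forall x, ~ C x -> f x = 0.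

(* continuity of a map into P(G) for the weak-* topology from C_c(G,R)
   (the initial topology of the maps mu |-> int f dmu), restricted to A *)
Definition weak_star_continuous_within (X G : topologicalType) (R : realType)
    (A : set X) (Phi : X -> G -> R) : Prop :=
  forall f : G -> R, Cc f -> {within A, continuous (fun x => mint (Phi x) f)}.

Definition equivariant_into_PK (G Z : topologicalType) (R : realType)
    (o : groupoid_ops G) (p : Z -> G) (act : G -> Z -> Z)
    (K : set G) (phi : Z -> G -> R) : Prop :=
  (((forall z, in_PK o K (phi z))) /\
     ((forall z g, msupp (phi z) g -> grange o g = p z)) /\
     ((forall g z, gsource o g = p z ->
                   phi (act g z) = mtranslate o g (phi z)))).

Definition equivariant_map_PK (G Z : topologicalType) (R : realType)
    (o : groupoid_ops G) (p : Z -> G) (act : G -> Z -> Z)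
    (K : set G) (phi : Z -> G -> R) : Prop :=
  equivariant_into_PK o p act K phi /\
  weak_star_continuous_within [set: Z] phi.

(* G-homotopy H : [0,1] x Z -> P_K(G) between phi0 and phi1
   ([0,1] x Z with the action of G on the Z factor). *)
Definition G_homotopic_PK (G Z : topologicalType) (R : realType)
    (o : groupoid_ops G) (p : Z -> G) (act : G -> Z -> Z)
    (K : set G) (phi0 phi1 : Z -> G -> R) : Prop :=
  exists H : R * Z -> G -> R,
    ((weak_star_continuous_within [set tz : R * Z | 0 <= tz.1 <= 1] H) /\
     ((forall t, 0 <= t <= 1 ->
           equivariant_into_PK o p act K (fun z => H (t, z)))) /\
     ((forall z, H (0, z) = phi0 z)) /\
     ((forall z, H (1, z) = phi1 z))).

(* Main.v *)
Require Import Defs.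
From HB Require Import structures.
From mathcomp Require Import all_boot all_order all_algebra.
From mathcomp Require Import all_classical all_reals all_analysis.
Import Order.TTheory GRing.Theory Num.Theory numFieldNormedType.Exports.
Local Open Scope classical_set_scope.
Local Open Scope ring_scope.
Lemma bump (R : realType) (G : topologicalType) (g0 : G) :
  hausdorff_space G -> locally_compact [set: G] ->
  exists (h : G -> R) (W : set G), [/\ compact W, continuous h,
     (forall x, ~ W x -> h x = 0), (forall x, 0 <= h x) & h g0 = 1].
Proof.
move=> hG lcG.
have [U nU [cU clU]] := lcG g0 I.
rewrite withinET in nU.
have crs := @locally_compact_completely_regular G R lcG hG.
have clB : closed (~` interior U) by apply: open_closedC; exact: open_interior.
have nB : ~ (~` interior U) g0 by move/(_ nU).
have := crs g0 _ clB nB => /(@uniform_separatorP _ R) [f [cf f01 f0 f1]].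
exists (fun x => 1 - f x), U; split.
- exact: cU.
- by move=> x; apply: cvgB; [exact: cvg_cst | exact: cf].
- move=> x nUx; have -> : f x = 1 by apply: f1; exists x => // /interior_subset.
  by rewrite subrr.
- move=> x; have /f01 := imageT f x; rewrite /= in_itv /= => /andP[_ ].
  by rewrite subr_ge0.
- have -> : f g0 = 0 by apply: f0; exists g0.
  by rewrite subr0.
Qed.
Section GAlg.
Variables (G : Type) (o : groupoid_ops G).
Hypothesis Hg : is_groupoid o.
Local Notation r := (grange o).
Local Notation s := (gsource o).
Local Notation m := (gmul o).
Local Notation i := (ginv o).

Lemma g_units g : gunits o (r g) /\ gunits o (s g).
Proof. by case: Hg => H _; apply: H. Qed.
Lemma g_unitE u : gunits o u -> r u = u /\ s u = u.
Proof. by case: Hg => _ [H _]; apply: H. Qed.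
Lemma g_rm g h : s g = r h -> r (m g h) = r g.
Proof. by case: Hg => _ [_ [H _]] /H []. Qed.
Lemma g_sm g h : s g = r h -> s (m g h) = s h.
Proof. by case: Hg => _ [_ [H _]] /H []. Qed.
Lemma g_assoc g h k : s g = r h -> s h = r k -> m (m g h) k = m g (m h k).
Proof. by case: Hg => _ [_ [_ [H _]]]; apply: H. Qed.
Lemma g_lid g : m (r g) g = g.
Proof. by case: Hg => _ [_ [_ [_ [H _]]]]; case: (H g). Qed.
Lemma g_rid g : m g (s g) = g.
Proof. by case: Hg => _ [_ [_ [_ [H _]]]]; case: (H g). Qed.
Lemma g_ri g : r (i g) = s g.
Proof. by case: Hg => _ [_ [_ [_ [_ H]]]]; case: (H g). Qed.
Lemma g_si g : s (i g) = r g.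
Proof. by case: Hg => _ [_ [_ [_ [_ H]]]]; case: (H g) => _ []. Qed.
Lemma g_mi g : m g (i g) = r g.
Proof. by case: Hg => _ [_ [_ [_ [_ H]]]]; case: (H g) => _ [_ []]. Qed.
Lemma g_im g : m (i g) g = s g.
Proof. by case: Hg => _ [_ [_ [_ [_ H]]]]; case: (H g) => _ [_ []]. Qed.
Lemma g_rr g : r (r g) = r g.
Proof. by case: (@g_unitE (r g) (g_units g).1). Qed.
Lemma g_sr g : s (r g) = r g.
Proof. by case: (@g_unitE (r g) (g_units g).1). Qed.

Lemma g_reconstr w g : r w = r g -> m w (m (i w) g) = g.
Proof.
move=> e; rewrite -g_assoc; first by rewrite g_mi e g_lid.
  by rewrite g_ri.
by rewrite g_si.
Qed.

Lemma g_transl g e1 e2 : r e1 = r g -> r e2 = r g ->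
  m (i (m (i g) e1)) (m (i g) e2) = m (i e1) e2.
Proof.
move=> h1 h2.
have ia1 : i (m (i g) e1) = m (i e1) g.
  have c1 : s (i g) = r e1 by rewrite g_si h1.
  (* inverse of product via uniqueness *)
  set w := m (i g) e1; set v := m (i e1) g.
  have sw : s w = s e1 by rewrite /w g_sm.
  have rv : r v = s e1 by rewrite /v g_rm ?g_ri // g_si h1.
  have wv : m w v = r w.
    rewrite /w /v g_assoc //.
    rewrite -[m e1 (m (i e1) g)]g_assoc ?g_ri ?g_si //.
    by rewrite g_mi h1 g_lid g_im /w g_rm // g_ri.
  have := g_rid (i w); rewrite g_si.
  rewrite -[in X in m _ X = _]wv -g_assoc ?g_si ?g_ri //; last by rewrite sw rv.
  by rewrite g_im sw -rv g_lid => <-.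
rewrite ia1 (@g_assoc (i e1) g (m (i g) e2)) ?g_si ?h1 //; last first.
  by rewrite g_rm ?g_ri ?g_si ?h2.
by rewrite -(@g_assoc g (i g) e2) ?g_ri ?g_si ?h2 // g_mi -h2 g_lid.
Qed.
End GAlg.
Arguments g_units {G o}.
Arguments g_unitE {G o}.
Arguments g_rm {G o}.
Arguments g_sm {G o}.
Arguments g_assoc {G o}.
Arguments g_lid {G o}.
Arguments g_rid {G o}.
Arguments g_ri {G o}.
Arguments g_si {G o}.
Arguments g_mi {G o}.
Arguments g_im {G o}.
Arguments g_rr {G o}.
Arguments g_sr {G o}.
Arguments g_reconstr {G o}.
Arguments g_transl {G o}.
Lemma closed_equalizer (X Y : topologicalType) (f g : X -> Y) :
  hausdorff_space Y -> continuous f -> continuous g ->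
  closed [set xy : X * X | f xy.1 = g xy.2].
Proof.
move=> hY cf cg [x y] clp; apply: hY => A B nA nB /=.
have nP : nbhs (x, y) ((f @^-1` A) `*` (g @^-1` B)).
  exists (f @^-1` A, g @^-1` B) => //; split; [exact: cf | exact: cg].
have [[a b] [/= eab [/= Aa Bb]]] := clp _ nP.
by exists (f a); split => //; rewrite eab.
Qed.
Section Top.
Variables (G : topologicalType) (o : groupoid_ops G).
Hypothesis He : etale_groupoid o.
Local Notation r := (grange o).
Local Notation s := (gsource o).
Local Notation m := (gmul o).
Local Notation i := (ginv o).

Definition mulset (A B : set G) : set G :=
  (fun x : G * G => m x.1 x.2) @` (A `*` B `&` [set x | s x.1 = r x.2]).

Lemma He_groupoid : is_groupoid o. Proof. by case: He. Qed.
Lemma He_haus : hausdorff_space G. Proof. by case: He => _ []. Qed.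
Lemma cont_r : continuous r. Proof. by case: He => _ [_ [_ [_ [_ []]]]]. Qed.
Lemma cont_i : continuous i. Proof. by case: He => _ [_ [_ [_ []]]]. Qed.
Lemma cont_s : continuous s.
Proof.
have -> : s = r \o i by apply/funext => x /=; rewrite g_ri //; exact: He_groupoid.
by move=> x; apply: continuous_comp; [exact: cont_i | exact: cont_r].
Qed.

Lemma mulset_compact A B : compact A -> compact B -> compact (mulset A B).
Proof.
move=> cA cB; apply: continuous_compact.
  apply: (@continuous_subspaceW _ _ _ [set gh : G * G | s gh.1 = r gh.2]).
    by move=> x [].
  by case: He => _ [_ [_ []]].
apply: compact_closedI; first exact: compact_setX.
apply: closed_equalizer; [exact: He_haus | exact: cont_s | exact: cont_r].
Qed.

Lemma inv_compact A : compact A -> compact (i @` A).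
Proof.
move=> cA; apply: continuous_compact => //; apply: continuous_subspaceT.
exact: cont_i.
Qed.

Lemma supp_nonempty (R : realType) (K : set G) (mu : G -> R) :
  in_PK o K mu -> exists g0, mu g0 != 0.
Proof.
case=> _ [_ [s1 _]].
have : \sum_(g \in msupp mu) mu g != 0 by rewrite s1 oner_neq0.
by case/(@fsbigN1 _ _ _ unit _ _ (fun _ g => mu g) tt) => g _ ?; exists g.
Qed.

Lemma supp_cover (R : realType) (Z : topologicalType) (phi : Z -> G -> R)
    (K : set G) (C : set Z) :
  (forall z, in_PK o K (phi z)) -> weak_star_continuous_within [set: Z] phi ->
  compact C ->
  exists W, compact W /\ forall c, C c -> exists w, msupp (phi c) w /\ W w.
Proof.
move=> inK wc cC.
have loc z : exists VW : set Z * set G, [/\ open VW.1, VW.1 z, compact VW.2 &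
    forall y, VW.1 y -> exists w, msupp (phi y) w /\ VW.2 w].
  have [g0 ng0] := @supp_nonempty R _ _ (inK z).
  have [h [W [cW ch hW h0 hg0]]] := @bump R G g0 He_haus
    (ltac:(by case: He => _ [_ []])).
  have Cch : Cc h by split => //; exists W.
  have := wc h Cch; rewrite continuous_open_subspace; last exact: openT.
  move=> /(_ z (in_setT z)).
  set F := (fun x => mint (phi x) h) => cF.
  have Fz : 0 < F z.
    have [p0 [fin [_ _]]] := inK z.
    rewrite /F /mint (fsbigD1 g0) //=.
    rewrite hg0 mulr1 ltr_wpDr //.
      by apply: fsumr_ge0 => g _; apply: mulr_ge0.
    by rewrite lt0r ng0 p0.
  have nP : \forall t \near z, 0 < F t by apply: (@cvgr_gt R _ _ _ F (F z) cF).
  move: nP; rewrite /prop_near1 /= nbhsE => -[V [oV Vz] VP].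
  exists (V, W); split => // y /VP /= Fy.
  have : F y != 0 by rewrite gt_eqF.
  case/(@fsbigN1 _ _ _ unit _ _ (fun _ g => phi y g * h g) tt) => g sg; rewrite mulf_eq0 negb_or => /andP[_ hg].
  exists g; split => //; apply: contrapT => nW; move: hg; rewrite hW //.
  by rewrite eqxx.
pose F : set_system (set G) := [set Q | exists2 W0, compact W0 &
   forall W, compact W -> W0 `<=` W -> Q W].
have FF : Filter F.
  constructor.
  - by exists set0 => //; exact: compact0.
  - move=> P Q [W0 c0 H0] [W1 c1 H1]; exists (W0 `|` W1); first exact: compactU.
    by move=> W cW sW; split; [apply: H0 | apply: H1] => // x Wx; apply: sW;
      [left | right].
  - by move=> P Q PQ [W0 c0 H0]; exists W0 => // W cW sW; apply: PQ; apply: H0.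
have := (iffLR (compact_near_coveringP C)) cC (set G) F
  (fun W z => exists w, msupp (phi z) w /\ W w) FF.
case.
  move=> z Cz; have [[V W] [/= oV Vz cW HW]] := loc z.
  exists (V, [set i | W `<=` i]); first split.
  - by apply: (@open_nbhs_nbhs _ z V); split.
  - by exists W.
  move=> [x' i] /= [Vx' Wi]; have [w [sw Ww]] := HW x' Vx'.
  by exists w; split => //; exact: Wi.
move=> W0 c0 H0; exists W0; split => // c Cc; exact: (H0 W0 c0 (fun _ h => h) c Cc).
Qed.

Lemma supp_bound (R : realType) (Z : topologicalType) (phi : Z -> G -> R)
    (K : set G) (C : set Z) :
  (forall z, in_PK o K (phi z)) -> weak_star_continuous_within [set: Z] phi ->
  compact K -> compact C ->
  exists L, compact L /\ forall c g, C c -> msupp (phi c) g -> L g.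
Proof.
move=> inK wc cK cC.
have Hg := He_groupoid.
have [W [cW HW]] := @supp_cover R Z phi K C inK wc cC.
exists (mulset W K); split; first exact: mulset_compact.
move=> c g Cc sg; have [w [sw Ww]] := HW c Cc.
have [_ [_ [_ HP]]] := inK c.
have [rwg Kwg] := HP w g sw sg.
exists (w, m (i w) g); last exact: (g_reconstr Hg).
split; first by split.
by rewrite /= (g_rm Hg) ?(g_ri Hg) // (g_si Hg).
Qed.
End Top.
Arguments mulset {G} o A B.

Lemma cross (R : realType) (G Z : topologicalType) (o : groupoid_ops G)
  (p : Z -> G) (act : G -> Z -> Z) (phi psi : Z -> G -> R) (C Lp Lq : set G)
  (C' : set Z) :
  is_groupoid o ->
  (forall z g, msupp (phi z) g -> grange o g = p z) ->
  (forall z g, msupp (psi z) g -> grange o g = p z) ->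
  (forall g z, gsource o g = p z -> phi (act g z) = mtranslate o g (phi z)) ->
  (forall g z, gsource o g = p z -> psi (act g z) = mtranslate o g (psi z)) ->
  (forall c g, C' c -> msupp (phi c) g -> Lp g) ->
  (forall c g, C' c -> msupp (psi c) g -> Lq g) ->
  (forall z, exists g c, C' c /\ gsource o g = p c /\ z = act g c) ->
  forall z g1 g2, msupp (phi z) g1 -> msupp (psi z) g2 ->
    mulset o (ginv o @` Lp) Lq (gmul o (ginv o g1) g2).
Proof.
move=> Hg anp anq eqp eqq HLp HLq HC z g1 g2.
have [g [c [Cc [sg ->]]]] := HC z.
rewrite eqp // eqq // /msupp /mtranslate /=.
case: ifPn => [/asboolP r1 s1|_]; last by rewrite eqxx.
case: ifPn => [/asboolP r2 s2|_]; last by rewrite eqxx.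
set a1 := gmul o (ginv o g) g1; set a2 := gmul o (ginv o g) g2.
exists (ginv o a1, a2); last exact: (g_transl Hg).
split; first split.
- by exists a1 => //; exact: (HLp c a1 Cc s1).
- exact: (HLq c a2 Cc s2).
by rewrite /= (g_si Hg) (anp c a1 s1) (anq c a2 s2).
Qed.

Lemma mint_widen (R : realType) (G : choiceType) (mu f : G -> R) (S : set G) :
  msupp mu `<=` S -> mint mu f = \sum_(g \in S) mu g * f g.
Proof.
move=> sS; rewrite /mint (fsbig_widen (msupp mu) S) // => g [_ /=].
by move=> /negP/negPn/eqP ->; rewrite mul0r.
Qed.

Lemma supp_comb (R : realType) (G : choiceType) (a b : R) (mu nu : G -> R) :
  msupp (fun g => a * mu g + b * nu g) `<=` msupp mu `|` msupp nu.
Proof.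
move=> g; rewrite /msupp /= => H.
case: (eqVneq (mu g) 0) => [m0|]; last by left.
case: (eqVneq (nu g) 0) => [n0|]; last by right.
by move: H; rewrite m0 n0 !mulr0 addr0 eqxx.
Qed.

Lemma mint_comb (R : realType) (G : choiceType) (a b : R) (mu nu f : G -> R) :
  finite_set (msupp mu) -> finite_set (msupp nu) ->
  mint (fun g => a * mu g + b * nu g) f = a * mint mu f + b * mint nu f.
Proof.
move=> fm fn.
have fS : finite_set (msupp mu `|` msupp nu) by rewrite finite_setU.
rewrite !(@mint_widen _ _ _ _ (msupp mu `|` msupp nu)) //; last exact: supp_comb.
rewrite !fsbig_finite // !mulr_sumr -big_split; apply: eq_bigr => g _.
by rewrite mulrDl !mulrA.
Qed.

Theorem proposition3p29 (R : realType) (G Z : topologicalType)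
  (o : groupoid_ops G) (p : Z -> G) (act : G -> Z -> Z)
  (K1 K2 : set G) (phi1 phi2 : Z -> G -> R) :
  etale_groupoid o ->
  hausdorff_space Z -> locally_compact [set: Z] ->
  G_space o p act -> proper_action o p act -> G_compact o p act ->
  compact K1 -> compact K2 ->
  equivariant_map_PK o p act K1 phi1 ->
  equivariant_map_PK o p act K2 phi2 ->
  exists K : set G, [/\ compact K, K1 `|` K2 `<=` K &
    G_homotopic_PK o p act K phi1 phi2].
Proof.
move=> He hZ lcZ GS prop Gc cK1 cK2 [[in1 [an1 eq1]] wc1] [[in2 [an2 eq2]] wc2].
have Hg := @He_groupoid G o He.
have [C [cC HC]] := Gc.
have [L1 [cL1 HL1]] := @supp_bound G o He R Z phi1 K1 C in1 wc1 cK1 cC.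
have [L2 [cL2 HL2]] := @supp_bound G o He R Z phi2 K2 C in2 wc2 cK2 cC.
set K12 := mulset o (ginv o @` L1) L2.
set K21 := mulset o (ginv o @` L2) L1.
have k12 := @cross R G Z o p act phi1 phi2 set0 L1 L2 C Hg an1 an2 eq1 eq2 HL1 HL2 HC.
have k21 := @cross R G Z o p act phi2 phi1 set0 L2 L1 C Hg an2 an1 eq2 eq1 HL2 HL1 HC.
have fin1 z : finite_set (msupp (phi1 z)) by case: (in1 z) => _ [].
have fin2 z : finite_set (msupp (phi2 z)) by case: (in2 z) => _ [].
exists (K1 `|` K2 `|` K12 `|` K21); split.
- apply: compactU; [apply: compactU; [exact: compactU|]|].
  + by apply: (@mulset_compact G o He); [exact: (@inv_compact G o He)|].
  + by apply: (@mulset_compact G o He); [exact: (@inv_compact G o He)|].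
- by move=> g [?|?]; [left; left; left | left; left; right].
pose H := fun (tz : R * Z) (g : G) =>
  (1 - tz.1) * phi1 tz.2 g + tz.1 * phi2 tz.2 g.
exists H; split; [|split; [|split]].
- move=> f Cf.
  have c1 : continuous (fun z => mint (phi1 z) f).
    move: (wc1 f Cf); rewrite continuous_open_subspace; last exact: openT.
    by move=> h z; exact: (h z (in_setT z)).
  have c2 : continuous (fun z => mint (phi2 z) f).
    move: (wc2 f Cf); rewrite continuous_open_subspace; last exact: openT.
    by move=> h z; exact: (h z (in_setT z)).
  have -> : (fun tz => mint (H tz) f) = (fun tz : R * Z =>
      (1 - tz.1) * mint (phi1 tz.2) f + tz.1 * mint (phi2 tz.2) f).
    by apply/funext => -[t z]; rewrite /H /=; apply: mint_comb.
  apply: continuous_subspaceT => -[t z].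
  apply: cvgD; apply: cvgM.
  + by apply: cvgB; [exact: cvg_cst | exact: cvg_fst].
  + exact: (@continuous_comp _ _ _ snd (fun z => mint (phi1 z) f) (t, z) cvg_snd (c1 z)).
  + exact: cvg_fst.
  + exact: (@continuous_comp _ _ _ snd (fun z => mint (phi2 z) f) (t, z) cvg_snd (c2 z)).
- move=> t /andP[t0 t1]; split; [|split].
  + move=> z; split; [|split; [|split]].
    * move=> g; rewrite /H /=; apply: addr_ge0; apply: mulr_ge0 => //.
      - by rewrite subr_ge0.
      - by case: (in1 z).
      - by case: (in2 z).
    * apply: (sub_finite_set (@supp_comb _ _ _ _ _ _)).
      by rewrite finite_setU; split.
    * have e mu : \sum_(g \in msupp mu) mu g = mint mu (fun _ => 1 : R).
        by apply: eq_fsbigr => g _; rewrite mulr1.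
      rewrite e /H /= mint_comb // -!e.
      have [_ [_ [-> _]]] := in1 z; have [_ [_ [-> _]]] := in2 z.
      by rewrite !mulr1 subrK.
    * move=> g1 g2 /supp_comb s1 /supp_comb s2.
      have ra g : (msupp (phi1 z) `|` msupp (phi2 z)) g -> grange o g = p z.
        by case=> [/an1|/an2].
      split; first by rewrite (ra g1 s1) (ra g2 s2).
      case: s1 => s1; case: s2 => s2.
      - left; left; left; have [_ [_ [_ HP]]] := in1 z; exact: (HP g1 g2 s1 s2).2.
      - by left; right; exact: (k12 z g1 g2 s1 s2).
      - by right; exact: (k21 z g1 g2 s1 s2).
      - left; left; right; have [_ [_ [_ HP]]] := in2 z; exact: (HP g1 g2 s1 s2).2.
  + by move=> z g /supp_comb [/an1|/an2].
  + move=> g z sg; apply/funext => e; rewrite /H /= (eq1 g z sg) (eq2 g z sg).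
    by rewrite /mtranslate; case: ifP => _ //; rewrite !mulr0 addr0.
- by move=> z; apply/funext => g; rewrite /H /= subr0 mul1r mul0r addr0.
- by move=> z; apply/funext => g; rewrite /H /= subrr mul0r add0r mul1r.
Qed.
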